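(* There is a constant $0<C<\infty$ such that for all $0<r\le1$ and all $u,v\in\mathbb{C}$, \[\big|\eta_u(B(0,r))-\eta_v(B(0,r))\big|\le C|u-v|^{1/2},\] where $B(0,r)$ is the closed Korányi ball in $\mathbb{H}$ of radius $r$ centered at the identity $0$.
   Context: $\mathbb{H}=\mathbb{C}\times\mathbb{R}$ with group law $(u,s)\cdot(v,t)=(u+v,s+t+\mathrm{Im}(\bar u v))$ and Korányi metric $d(p,q)=\|q^{-1}\cdot p\|$, $\|(u,s)\|=(|u|^4+4s^2)^{1/4}$. For $u\in\mathbb{C}$, $\pi^{-1}(u)=\{u\}\times\mathbb{R}$ is the vertical line over $u$, and $\eta_u$ is the $2$-dimensional Hausdorff measure (with respect to the Korányi metric) restricted to $\pi^{-1}(u)$. *)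

(* Defs.v *)
From HB Require Import structures.
From mathcomp Require Import all_boot all_order all_algebra.
From mathcomp Require Import all_classical all_reals all_analysis.
Set Implicit Arguments. Unset Strict Implicit. Unset Printing Implicit Defensive.
Import Order.TTheory GRing.Theory Num.Theory.
Local Open Scope classical_set_scope.
Local Open Scope ring_scope.

(* A point of C = R^2 is a pair (a, b) meaning a + i b. *)
Definition cpt (R : realType) := (R * R)%type.
Definition heis (R : realType) := (cpt R * R)%type.

Definition cabs (R : realType) (u : cpt R) : R := Num.sqrt (u.1 ^+ 2 + u.2 ^+ 2).

Definition im_conj_mul (R : realType) (u v : cpt R) : R := u.1 * v.2 - u.2 * v.1.

(* group law (u,s).(v,t) = (u+v, s+t+Im(conj u v)) *)
Definition hmul (R : realType) (p q : heis R) : heis R :=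
  ((p.1.1 + q.1.1, p.1.2 + q.1.2), p.2 + q.2 + im_conj_mul p.1 q.1).

Definition hinv (R : realType) (p : heis R) : heis R := ((- p.1.1, - p.1.2), - p.2).

Definition kor_norm (R : realType) (p : heis R) : R :=
  Num.sqrt (Num.sqrt ((p.1.1 ^+ 2 + p.1.2 ^+ 2) ^+ 2 + 4 * p.2 ^+ 2)).

Definition kor_dist (R : realType) (p q : heis R) : R := kor_norm (hmul (hinv q) p).

Definition heis0 (R : realType) : heis R := ((0, 0), 0).

Definition kor_ball (R : realType) (x : heis R) (r : R) : set (heis R) :=
  [set p | kor_dist p x <= r].

Definition vline (R : realType) (u : cpt R) : set (heis R) := [set p | p.1 = u].

(* diameter w.r.t. the Koranyi metric (diam of the empty set is 0) *)
Definition kor_diam (R : realType) (E : set (heis R)) : \bar R :=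
  ereal_sup ([set 0%E] `|` [set (kor_dist p q)%:E | p in E & q in E]).

Definition hausdorff2_delta (R : realType) (delta : R) (A : set (heis R)) : \bar R :=
  ereal_inf [set (\sum_(0 <= i <oo) (kor_diam (F i) * kor_diam (F i)))%E
            | F in [set F : nat -> set (heis R) |
                     A `<=` \bigcup_i F i /\ forall i, (kor_diam (F i) <= delta%:E)%E]].

(* 2-dimensional Hausdorff measure: lim_{delta -> 0+} = sup_{delta > 0} *)
Definition hausdorff2 (R : realType) (A : set (heis R)) : \bar R :=
  ereal_sup [set hausdorff2_delta delta A | delta in [set d : R | 0 < d]].

Definition eta_u (R : realType) (u : cpt R) (A : set (heis R)) : \bar R :=
  hausdorff2 (vline u `&` A).

(* Main.v *)
Require Import Defs.
From HB Require Import structures.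
From mathcomp Require Import all_boot all_order all_algebra.
From mathcomp Require Import all_classical all_reals all_analysis.
From mathcomp Require Import ring lra.
Import Order.TTheory GRing.Theory Num.Theory.
Local Open Scope classical_set_scope.
Local Open Scope ring_scope.

Section S.
Variable R : realType.

Lemma dist_vert (p q : heis R) : p.1 = q.1 ->
  kor_dist p q = Num.sqrt (2 * `|p.2 - q.2|).
Proof.
case: p q => [[a b] s] [[c e] t] /= [<- <-].
rewrite /kor_dist /kor_norm /hmul /hinv /im_conj_mul /=.
have -> : ((- a + a) ^+ 2 + (- b + b) ^+ 2) ^+ 2 + 4 * (- t + s + (- a * b - - b * a)) ^+ 2
   = (2 * `|s - t|) ^+ 2.
  by rewrite exprMn real_normK ?num_real //; ring.
by rewrite sqrtr_sqr ger0_norm // mulr_ge0.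
Qed.

Lemma diam_ge0 (E : set (heis R)) : (0 <= kor_diam E)%E.
Proof. by apply: ereal_sup_ubound; left. Qed.

Lemma dist_le_diam (E : set (heis R)) p q : E p -> E q ->
  ((kor_dist p q)%:E <= kor_diam E)%E.
Proof. by move=> Ep Eq; apply: ereal_sup_ubound; right; exists p => //; exists q. Qed.

Lemma diam_ub (E : set (heis R)) x : 0 <= x ->
  (forall p q, E p -> E q -> kor_dist p q <= x) -> (kor_diam E <= x%:E)%E.
Proof.
move=> x0 H; apply: ge_ereal_sup => _ [->|[p Ep [q Eq <-]]].
  by rewrite lee_fin.
by rewrite lee_fin; apply: H.
Qed.

Lemma find_cell (a w t : R) n : 0 <= w -> a <= t -> t <= a + n.+1%:R * w ->
  exists i, (i <= n)%N /\ a + i%:R * w <= t <= a + i.+1%:R * w.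
Proof.
move=> w0 at_; elim: n => [|n IH] H.
  by exists 0%N; split => //; rewrite mul0r addr0 at_.
case: (leP t (a + n.+1%:R * w)) => Ht.
  by have [i [Hi1 Hi2]] := IH Ht; exists i; split => //; apply: leqW.
by exists n.+1; split => //; rewrite (ltW Ht) H.
Qed.


Definition seg (u : cpt R) (h : R) : set (heis R) := [set p | p.1 = u /\ `|p.2| <= h].

Lemma H2d_ub (u : cpt R) h (A : set (heis R)) (d : R) : 0 < d -> 0 <= h ->
  A `<=` seg u h -> (hausdorff2_delta d A <= (4 * h)%:E)%E.
Proof.
move=> d0 h0 As.
pose k := (Num.Def.trunc (4 * h / d ^+ 2)).+1.
have kpos : (0 < k%:R :> R) by rewrite ltr0n.
pose w := 2 * h / k%:R.
have w0 : 0 <= w by rewrite /w divr_ge0 // ?mulr_ge0 // ltW.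
have kw : k%:R * w = 2 * h by rewrite /w mulrC divfK // gt_eqF.
pose F i := if (i < k)%N then
   [set p : heis R | p.1 = u /\ - h + i%:R * w <= p.2 <= - h + i.+1%:R * w] else set0.
have sw : Num.sqrt (2 * w) <= d.
  rewrite -(ger0_norm (ltW d0)) -sqrtr_sqr ler_sqrt ?sqr_ge0 //.
  have : 4 * h / d ^+ 2 < k%:R by apply: truncnS_gt.
  rewrite ltr_pdivrMr ?exprn_gt0 // => H.
  rewrite /w mulrA ler_pdivrMr //; lra.
have diamF i : (kor_diam (F i) <= (Num.sqrt (2 * w))%:E)%E.
  apply: diam_ub; first exact: sqrtr_ge0.
  rewrite /F; case: ifP => _ p q //= [p1 /andP[p2 p3]] [q1 /andP[q2 q3]].
  rewrite dist_vert; last by rewrite p1 q1.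
  rewrite ler_sqrt ?mulr_ge0 // ler_pM2l // ler_norml.
  rewrite -[i.+1]addn1 natrD mulrDl mul1r in p3 q3.
  apply/andP; split; lra.
apply: ge_ereal_inf.
exists (\sum_(0 <= i <oo) (kor_diam (F i) * kor_diam (F i)))%E.
  exists F => //; split.
  - move=> p /As [p1 p2].
    have hp : -h <= p.2 <= h by rewrite -ler_norml.
    case/andP: hp => hp1 hp2.
    have hk : p.2 <= - h + k.-1.+1%:R * w by rewrite prednK // kw; lra.
    have [i [ik Hi]] := @find_cell (- h) w p.2 k.-1 w0 hp1 hk.
    exists i => //; rewrite /F.
    have -> : (i < k)%N by rewrite -[k]prednK // ltnS.
    by split.
  - move=> i; apply: le_trans (diamF i) _; by rewrite lee_fin.
rewrite (nneseries_split 0 k); last by move=> i _; rewrite mule_ge0 // diam_ge0.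
rewrite add0n eseries0 ?adde0; last first.
  move=> i ki _; rewrite /F ifF; last by rewrite ltnNge ki.
  have : (kor_diam (@set0 (heis R)) <= 0%:E)%E by apply: diam_ub => // p q [].
  move=> H; have -> : kor_diam (@set0 (heis R)) = 0%E.
    by apply/eqP; rewrite eq_le H diam_ge0.
  by rewrite mule0.
apply: (@le_trans _ _ (\sum_(0 <= i < k) (2 * w)%:E)%E).
  apply: lee_sum => i _.
  have hd := diam_ge0 (F i).
  apply: le_trans (lee_pmul hd hd (diamF i) (diamF i)) _.
  by rewrite -EFinM lee_fin -expr2 sqr_sqrtr // mulr_ge0.
rewrite sumEFin sumr_const_nat subn0 lee_fin -mulrnAr -[w *+ k]mulr_natl kw; lra.
Qed.


Lemma leb_itv (a b : R) : (lebesgue_measure [set` `[a, b]] <= `|b - a|%:E)%E.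
Proof.
rewrite lebesgue_measure_itv /=; case: ifP => _.
  by rewrite -EFinD lee_fin ler_norm.
by rewrite lee_fin.
Qed.


Lemma cover_lb (u : cpt R) h (F : nat -> set (heis R)) : 0 <= h ->
  seg u h `<=` \bigcup_i F i ->
  ((4 * h)%:E <= \sum_(0 <= i <oo) (kor_diam (F i) * kor_diam (F i)))%E.
Proof.
move=> h0 cov.
have tge0 i : (0 <= kor_diam (F i) * kor_diam (F i))%E by rewrite mule_ge0 // diam_ge0.
case: (pselect (exists i, kor_diam (F i) = +oo%E)) => [[i Hi]|Hfin].
  apply: le_trans (nneseries_lim_ge i.+1 (fun n _ _ => tge0 n)).
  rewrite big_nat_recr //= Hi mulyy addey ?leey //.
  rewrite gt_eqF // (@lt_le_trans _ _ 0%E) ?ltNy0 //.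
  by apply: sume_ge0 => n _; exact: tge0.
pose d i := fine (kor_diam (F i)).
have Hd i : kor_diam (F i) = (d i)%:E.
  rewrite /d fineK // ge0_fin_numE ?diam_ge0 // ltey; apply/eqP => H.
  by apply: Hfin; exists i.
pose P i := [set t | F i (u, t)].
have key i t t' : P i t -> P i t' -> 2 * (t - t') <= d i ^+ 2.
  move=> Pt Pt'; have := @dist_le_diam (F i) (u, t) (u, t') Pt Pt'; rewrite Hd lee_fin dist_vert //= => H.
  have d0 : 0 <= d i by rewrite -lee_fin -Hd diam_ge0.
  have E : 2 * `|t - t'| = Num.sqrt (2 * `|t - t'|) ^+ 2 by rewrite sqr_sqrtr // mulr_ge0.
  apply: (@le_trans _ _ (2 * `|t - t'|)); first by rewrite ler_pM2l // real_ler_norm // num_real.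
  by rewrite E !expr2 ler_pM // sqrtr_ge0.
pose I i := [set` `[inf (P i), inf (P i) + d i ^+ 2 / 2]].
have PI i t : P i t -> I i t.
  move=> Pt.
  have lbP : lbound (P i) (t - d i ^+ 2 / 2).
    move=> t' Pt'; have := key i t t' Pt Pt'; lra.
  have h1 : inf (P i) <= t by apply: ge_inf => //; exists (t - d i ^+ 2 / 2).
  have h2 : t - d i ^+ 2 / 2 <= inf (P i) by apply: lb_le_inf => //; exists t.
  rewrite /I /= in_itv /=; apply/andP; split => //; lra.
pose J : set R := [set` `[- h, h]].
have covI : J `<=` \bigcup_i I i.
  move=> t; rewrite /J /= in_itv /= => Ht.
  have : seg u h (u, t) by split => //=; rewrite ler_norml.
  by move/cov => [i _ Fi]; exists i => //; apply: PI.
have := @measure_sigma_subadditive _ _ _ (@lebesgue_measure R) _ I (fun i => measurable_itv _) (measurable_itv _) covI.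
move=> H.
have H1 : ((2 * h)%:E <= lebesgue_measure J)%E.
  rewrite /J lebesgue_measure_itv /=; case: ifP => [_|].
    by rewrite -EFinD lee_fin; lra.
  rewrite lte_fin => /negbT; rewrite -leNgt => hh.
  rewrite lee_fin; lra.
have H2 : (\sum_(0 <= n <oo) lebesgue_measure (I n) <=
          \sum_(0 <= n <oo) ((1/2)%:E * (kor_diam (F n) * kor_diam (F n))))%E.
  apply: lee_nneseries => [n _ _|n _]; first exact: measure_ge0.
  apply: le_trans (leb_itv _ _) _.
  rewrite Hd -!EFinM lee_fin addrAC subrr add0r ger0_norm; last first.
    by rewrite divr_ge0 // sqr_ge0.
  by rewrite expr2; lra.
rewrite nneseriesZl // in H2.
have H3 := le_trans H1 (le_trans H H2).
have S0 : (0 <= \sum_(0 <= i <oo) (kor_diam (F i) * kor_diam (F i)))%E.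
  by apply: nneseries_ge0 => n _ _; exact: tge0.
move: H3 S0; case: (\sum_(0 <= i <oo) _)%E => [r||] //=.
- by rewrite -EFinM !lee_fin; lra.
- by move=> _ _; rewrite leey.
Qed.


Lemma H2_ub (u : cpt R) h (A : set (heis R)) : 0 <= h -> A `<=` seg u h ->
  (hausdorff2 A <= (4 * h)%:E)%E.
Proof.
move=> h0 As; apply: ge_ereal_sup => _ [d d0 <-]; exact: H2d_ub d0 h0 As.
Qed.

Lemma H2_lb (u : cpt R) h (A : set (heis R)) : 0 <= h -> seg u h `<=` A ->
  ((4 * h)%:E <= hausdorff2 A)%E.
Proof.
move=> h0 sA; apply: le_ereal_sup_tmp; exists (hausdorff2_delta 1 A).
  by exists 1 => //=; rewrite ltr01.
apply: le_ereal_inf_tmp => _ [F [cov _] <-].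
have := @cover_lb u h F h0 (subset_trans sA cov). move=> X. exact X.
Qed.

Lemma H2_ge0 (A : set (heis R)) : (0 <= hausdorff2 A)%E.
Proof.
apply: le_ereal_sup_tmp; exists (hausdorff2_delta 1 A).
  by exists 1 => //=; rewrite ltr01.
apply: le_ereal_inf_tmp => _ [F [cov _] <-].
by apply: nneseries_ge0 => n _ _; rewrite mule_ge0 // diam_ge0.
Qed.

Lemma ball_char (r : R) (p : heis R) : 0 <= r ->
  kor_ball (heis0 R) r p <-> (p.1.1 ^+ 2 + p.1.2 ^+ 2) ^+ 2 + 4 * p.2 ^+ 2 <= r ^+ 4.
Proof.
move=> r0; case: p => [[a b] t].
rewrite /kor_ball /kor_dist /kor_norm /hmul /hinv /im_conj_mul /heis0 /=.
have -> : ((- 0 + a) ^+ 2 + (- 0 + b) ^+ 2) ^+ 2 + 4 * (- 0 + t + (- 0 * b - - 0 * a)) ^+ 2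
  = (a ^+ 2 + b ^+ 2) ^+ 2 + 4 * t ^+ 2 by ring.
have er : r = Num.sqrt (Num.sqrt (r ^+ 4)).
  have -> : r ^+ 4 = (r ^+ 2) ^+ 2 by rewrite -exprM.
  by rewrite sqrtr_sqr ger0_norm ?sqr_ge0 // sqrtr_sqr ger0_norm.
rewrite [X in _ <= X]er ler_sqrt ?sqrtr_ge0 // ler_sqrt //.
by rewrite exprn_ge0.
Qed.

Lemma eta_val (u : cpt R) (r : R) : 0 <= r ->
  eta_u u (kor_ball (heis0 R) r) =
  (4 * Num.sqrt ((r ^+ 4 - (u.1 ^+ 2 + u.2 ^+ 2) ^+ 2) / 4))%:E.
Proof.
move=> r0.
set M := (r ^+ 4 - _) / 4.
have ch (p : heis R) : (Defs.vline u `&` kor_ball (heis0 R) r)%classic p <-> p.1 = u /\ p.2 ^+ 2 <= M.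
  rewrite /Defs.vline /=; split.
    by move=> [p1 /(ball_char r p r0)]; rewrite p1 /M => H; split => //; lra.
  by move=> [p1 H]; split => //; apply/(ball_char r p r0); rewrite p1; move: H; rewrite /M; lra.
apply/eqP; rewrite eq_le; apply/andP; split.
  apply: (@H2_ub u); first exact: sqrtr_ge0.
  move=> p /ch [p1 H]; split => //.
  by rewrite -sqrtr_sqr ler_sqrt // (le_trans _ H) ?sqr_ge0.
case: (leP 0 M) => M0.
  apply: (@H2_lb u); first exact: sqrtr_ge0.
  move=> p [p1 H]; apply/ch; split => //.
  rewrite -(sqr_sqrtr M0) -real_normK ?num_real //.
  by rewrite lerXn2r ?nnegrE ?sqrtr_ge0.
have -> : Num.sqrt M = 0 by apply/eqP; rewrite sqrtr_eq0 ltW.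
by rewrite mulr0 H2_ge0.
Qed.

End S.
Section S2.
Variable R : realType.

Lemma sq_le (x y : R) : 0 <= y -> x ^+ 2 <= y ^+ 2 -> x <= y.
Proof.
move=> y0 H; apply: le_trans (real_ler_norm (num_real x)) _.
by rewrite -sqrtr_sqr -(ger0_norm y0) -sqrtr_sqr ler_sqrt ?sqr_ge0.
Qed.

Lemma sqrt_holder (x y : R) : 0 <= x -> 0 <= y ->
  `|Num.sqrt x - Num.sqrt y| <= Num.sqrt `|x - y|.
Proof.
move=> x0 y0; apply: sq_le; first exact: sqrtr_ge0.
rewrite sqr_sqrtr // real_normK ?num_real //.
rewrite -[X in _ <= `|X - _|](sqr_sqrtr x0) -[X in _ <= `|_ - X|](sqr_sqrtr y0).
have a0 := sqrtr_ge0 x; have b0 := sqrtr_ge0 y.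
move: (Num.sqrt x) (Num.sqrt y) a0 b0 => a b a0 b0.
case: (leP b a) => ab.
  rewrite ger0_norm; first by nra.
  by rewrite subr_ge0; nra.
rewrite ler0_norm; first by nra.
by rewrite subr_le0; nra.
Qed.

Lemma pow4_lip (a b : R) : 0 <= a <= 1 -> 0 <= b <= 1 ->
  `|a ^+ 4 - b ^+ 4| <= 4 * `|a - b|.
Proof.
move=> /andP[a0 a1] /andP[b0 b1].
have e : a ^+ 4 - b ^+ 4 = (a - b) * ((a + b) * (a ^+ 2 + b ^+ 2)) by ring.
rewrite e normrM mulrC ler_wpM2r //.
rewrite ger0_norm; last by rewrite mulr_ge0 // ?addr_ge0 // sqr_ge0.
have h1 : a + b <= 2 by lra.
have h2 : a ^+ 2 + b ^+ 2 <= 2 by rewrite !expr2; nra.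
have : (a + b) * (a ^+ 2 + b ^+ 2) <= 2 * 2.
  by apply: ler_pM => //; rewrite ?addr_ge0 ?sqr_ge0.
lra.
Qed.

Lemma min_lip (a b r : R) : `|Num.min a r - Num.min b r| <= `|a - b|.
Proof.
have n1 := real_ler_norm (num_real (a - b)).
have n2 : b - a <= `|a - b| by rewrite distrC real_ler_norm // num_real.
case: (leP a r) => ha; case: (leP b r) => hb;
  rewrite ?(min_l ha) ?(min_r (ltW ha)) ?(min_l hb) ?(min_r (ltW hb)) ?subrr ?normr0 //;
  rewrite ler_norml; apply/andP; split; lra.
Qed.

Lemma cabs_ge0 (u : cpt R) : 0 <= cabs u.
Proof. exact: sqrtr_ge0. Qed.

Lemma cabs_tri (p q : cpt R) : cabs (p.1 + q.1, p.2 + q.2) <= cabs p + cabs q.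
Proof.
apply: sq_le; first by rewrite addr_ge0 // cabs_ge0.
rewrite /cabs /= sqr_sqrtr; last by rewrite addr_ge0 // sqr_ge0.
rewrite /cabs /=.
have cs : p.1 * q.1 + p.2 * q.2 <= Num.sqrt (p.1 ^+ 2 + p.2 ^+ 2) * Num.sqrt (q.1 ^+ 2 + q.2 ^+ 2).
  rewrite -sqrtrM ?addr_ge0 ?sqr_ge0 //.
  apply: le_trans (real_ler_norm (num_real _)) _.
  rewrite -sqrtr_sqr ler_sqrt; last by rewrite mulr_ge0 // addr_ge0 // sqr_ge0.
  have : 0 <= (p.1 * q.2 - p.2 * q.1) ^+ 2 by rewrite sqr_ge0.
  rewrite !expr2; nra.
move: cs; set s := _ * _; move=> cs.
have -> : (p.1 + q.1) ^+ 2 + (p.2 + q.2) ^+ 2 =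
   p.1 ^+ 2 + p.2 ^+ 2 + (q.1 ^+ 2 + q.2 ^+ 2) + 2 * (p.1 * q.1 + p.2 * q.2) by ring.
rewrite sqrrD !sqr_sqrtr ?addr_ge0 ?sqr_ge0 // -/s -mulr_natr; lra.
Qed.

Lemma cabs_rev (u v : cpt R) : `|cabs u - cabs v| <= cabs (u.1 - v.1, u.2 - v.2).
Proof.
have h1 := cabs_tri (u.1 - v.1, u.2 - v.2) v.
have h2 := cabs_tri (v.1 - u.1, v.2 - u.2) u.
rewrite /= !subrK in h1 h2.
have e : cabs (v.1 - u.1, v.2 - u.2) = cabs (u.1 - v.1, u.2 - v.2).
  by rewrite /cabs /=; congr Num.sqrt; ring.
have ev : cabs (v.1, v.2) = cabs v by case: (v).
have eu : cabs (u.1, u.2) = cabs u by case: (u).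
rewrite e ev in h2; rewrite eu in h1.
rewrite ler_norml; apply/andP; split; lra.
Qed.


Lemma clamp (u : cpt R) (r : R) : 0 <= r ->
  Num.sqrt ((r ^+ 4 - (u.1 ^+ 2 + u.2 ^+ 2) ^+ 2) / 4) =
  Num.sqrt ((r ^+ 4 - (Num.min (cabs u) r) ^+ 4) / 4).
Proof.
move=> r0.
have en : u.1 ^+ 2 + u.2 ^+ 2 = cabs u ^+ 2 by rewrite sqr_sqrtr // addr_ge0 // sqr_ge0.
rewrite en -exprM.
case: (leP (cabs u) r) => h.
  by [].
rewrite subrr mul0r sqrtr0.
apply/eqP; rewrite sqrtr_eq0 pmulr_lle0 ?invr_gt0 // subr_le0.
by rewrite lerXn2r ?nnegrE // ?cabs_ge0 // ltW.
Qed.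

Lemma final_ineq (u v : cpt R) (r : R) : 0 < r -> r <= 1 ->
  `|4 * Num.sqrt ((r ^+ 4 - (u.1 ^+ 2 + u.2 ^+ 2) ^+ 2) / 4) -
    4 * Num.sqrt ((r ^+ 4 - (v.1 ^+ 2 + v.2 ^+ 2) ^+ 2) / 4)|
  <= 4 * Num.sqrt (cabs (u.1 - v.1, u.2 - v.2)).
Proof.
move=> r0 r1.
rewrite !(clamp _ _ (ltW r0)).
set a := Num.min (cabs u) r; set b := Num.min (cabs v) r.
have a0 : 0 <= a by rewrite le_min cabs_ge0 ltW.
have b0 : 0 <= b by rewrite le_min cabs_ge0 ltW.
have ar : a <= r by rewrite ge_min lexx orbT.
have br : b <= r by rewrite ge_min lexx orbT.
have a4 : a ^+ 4 <= r ^+ 4 by rewrite lerXn2r ?nnegrE // ltW.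
have b4 : b ^+ 4 <= r ^+ 4 by rewrite lerXn2r ?nnegrE // ltW.
rewrite -mulrBr normrM ger0_norm // ler_pM2l //.
have hA : 0 <= (r ^+ 4 - a ^+ 4) / 4 by rewrite divr_ge0 // subr_ge0.
have hB : 0 <= (r ^+ 4 - b ^+ 4) / 4 by rewrite divr_ge0 // subr_ge0.
apply: le_trans (sqrt_holder _ _ hA hB) _.
rewrite ler_sqrt ?cabs_ge0 //.
have e : (r ^+ 4 - a ^+ 4) / 4 - (r ^+ 4 - b ^+ 4) / 4 = - ((a ^+ 4 - b ^+ 4) / 4) by field.
rewrite e normrN normrM (ger0_norm (x := 4^-1)) ?invr_ge0 //.
have ha1 : 0 <= a <= 1 by rewrite a0 /=; lra.
have hb1 : 0 <= b <= 1 by rewrite b0 /=; lra.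
have h1 := pow4_lip _ _ ha1 hb1.
have h2 := min_lip (cabs u) (cabs v) r.
have h3 := cabs_rev u v.
rewrite -/a -/b in h2.
lra.
Qed.

End S2.

Theorem lemma4p5 (R : realType) :
  exists C : R, 0 < C /\
    forall (r : R), 0 < r -> r <= 1 ->
    forall (u v : cpt R),
      (`| eta_u u (kor_ball (heis0 R) r) - eta_u v (kor_ball (heis0 R) r) |
         <= (C * Num.sqrt (cabs (u.1 - v.1, u.2 - v.2)))%:E)%E.
Proof.
exists 4; split; first by rewrite ltr0n.
move=> r r0 r1 u v.
rewrite (@eta_val R u r (ltW r0)) (@eta_val R v r (ltW r0)).
rewrite -EFinB abse_EFin lee_fin.
exact: final_ineq.
Qed.
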